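(* Consider a run of the Exponential Averaging with Predictions algorithm with parameter $\alpha\ge1$ on an instance of Display Ads with free disposal, with a prediction that is a feasible allocation. Then $$\mathrm{PRD}\ \le\ \sum_a\left((B_a-\ell_a)\,\beta_a^{(T)}+\frac{1}{\alpha_B}\sum_{t\in \mathbf X_a\setminus \mathbf P_a}\left(w_{at}-\beta_a^{(t-1)}\right)+\sum_{t\in\mathbf P_a\cap\mathbf X_a}w_{at}\right),$$ where the outer sum ranges over all advertisers (including the dummy advertiser).
   Context: Display Ads with free disposal: there are real advertisers $a\in\{1,\dots,k\}$ with integer budgets $B_a\ge 1$, plus a dummy advertiser $a=0$ with budget at least the total number of impressions and value $0$ for every impression. Impressions $t=1,\dots,T$ arrive online; when $t$ arrives, the values $w_{at}\ge 0$ for all $a$ are revealed (with $w_{0t}=0$) and $t$ must be assigned immediately to one advertiser. A prediction is a fixed feasible allocation (each impression assigned to one advertiser, each real advertiser $a$ receiving at most $B_a$ impressions); $\mathrm{PRD}(t)$ denotes the advertiser the prediction assigns $t$ to, revealed on arrival of $t$, and $\mathrm{PRD}$ also denotes the total value of the predicted allocation. Algorithm, parameter $\alpha\ge1$: let $B:=\min_a B_a$ over real advertisers, $e_B:=(1+1/B)^B$, $\alpha_B:=B(e_B^{\alpha/B}-1)$, and for each advertiser $e_{B_a}:=(1+1/B_a)^{B_a}$. Initially each advertiser $a$ holds a multiset $S_a$ of $B_a$ zero-value impressions and $\beta_a=0$. When $t$ arrives: $a_P:=\mathrm{PRD}(t)$; $a_E$ is any maximizer of $w_{at}-\beta_a$;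 if $\alpha_B(w_{a_Pt}-\beta_{a_P})\ge w_{a_Et}-\beta_{a_E}$ then $a:=a_P$, else $a:=a_E$. Add $t$ to $S_a$, remove an element of minimum value from $S_a$, and with $w_1\le\dots\le w_{B_a}$ the values in $S_a$ set $\beta_a:=\frac{e_{B_a}^{\alpha/B_a}-1}{e_{B_a}^{\alpha}-1}\sum_{i=1}^{B_a}w_ie_{B_a}^{\alpha(B_a-i)/B_a}$. Notation: $\beta_a^{(t)}$ is the value of $\beta_a$ after processing impression $t$ ($\beta_a^{(0)}=0$); $a^{(t)}$ is the advertiser the algorithm assigns $t$ to; $\mathbf X_a:=\{t: a^{(t)}=a\}$; $\mathbf P_a:=\{t:\mathrm{PRD}(t)=a\}$; $\ell_a:=|\mathbf P_a\cap\mathbf X_a|$. *)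

(* Defs.v *)
From HB Require Import structures.
From mathcomp Require Import all_boot all_order all_algebra.
From mathcomp Require Import reals exp.
Set Implicit Arguments. Unset Strict Implicit. Unset Printing Implicit Defensive.
Import Order.TTheory GRing.Theory Num.Theory.
Local Open Scope ring_scope.

(* Advertisers are 'I_k.+1; ord0 is the dummy advertiser, 1..k are real ones.
   Impressions are the natural numbers t = 1..T. *)

Definition eB {R : realType} (n : nat) : R := (1 + n%:R^-1) ^+ n.

Definition alphaB {R : realType} (alpha : R) (B : nat) : R :=
  B%:R * (eB B `^ (alpha / B%:R) - 1).

(* beta computed from the multiset S (of size n) of values held by an
   advertiser with budget n: with w_1 <= ... <= w_n the sorted values,
   (e_n^{alpha/n} - 1)/(e_n^alpha - 1) * sum_{i=1}^n w_i e_n^{alpha (n-i)/n}.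
   Below the index i is 0-based, so w_{i+1} = nth 0 (sort S) i. *)
Definition betaS {R : realType} (alpha : R) (n : nat) (S : seq R) : R :=
  (eB n `^ (alpha / n%:R) - 1) / (eB n `^ alpha - 1) *
  \sum_(i < n) nth 0 (sort <=%R S) i * eB n `^ (alpha * (n - i.+1)%N%:R / n%:R).

Fixpoint Sset {R : realType} (k : nat) (B : 'I_k.+1 -> nat)
    (w : 'I_k.+1 -> nat -> R) (asg : nat -> 'I_k.+1) (a : 'I_k.+1) (t : nat)
    : seq R :=
  match t with
  | 0 => nseq (B a) 0
  | t'.+1 =>
      let S := Sset B w asg a t' in
      if asg t'.+1 == a then behead (sort <=%R (w a t'.+1 :: S)) else S
  end.

Definition beta {R : realType} (k : nat) (alpha : R) (B : 'I_k.+1 -> nat)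
    (w : 'I_k.+1 -> nat -> R) (asg : nat -> 'I_k.+1) (a : 'I_k.+1) (t : nat) : R :=
  betaS alpha (B a) (Sset B w asg a t).

(* B := min over real advertisers of B_a (k >= 1 assumed). *)
Definition Bmin (k : nat) (B : 'I_k.+1 -> nat) : nat :=
  \big[minn/B (inord 1)]_(a < k.+1 | a != ord0) B a.

Definition is_run {R : realType} (k : nat) (alpha : R) (B : 'I_k.+1 -> nat)
    (w : 'I_k.+1 -> nat -> R) (PRD : nat -> 'I_k.+1) (T : nat)
    (asg : nat -> 'I_k.+1) : Prop :=
  forall t, (1 <= t <= T)%N ->
    exists aE : 'I_k.+1,
      (forall a : 'I_k.+1,
         w a t - beta alpha B w asg a t.-1 <= w aE t - beta alpha B w asg aE t.-1) /\
      asg t = (if alphaB alpha (Bmin B) *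
                  (w (PRD t) t - beta alpha B w asg (PRD t) t.-1)
                >= w aE t - beta alpha B w asg aE t.-1
               then PRD t else aE).

(* Main.v *)
Require Import Defs.
From HB Require Import structures.
From mathcomp Require Import all_boot all_order all_algebra.
From mathcomp Require Import reals exp zify.
Import Order.TTheory GRing.Theory Num.Theory.
Local Open Scope ring_scope.

Module Helpers.
Set Implicit Arguments. Unset Strict Implicit.


Section Aux.
Variable R : realType.

Fixpoint ins (x : R) (s : seq R) : seq R :=
  match s with
  | [::] => [:: x]
  | y :: s' => if x <= y then x :: y :: s' else y :: ins x s'
  end.

Lemma perm_ins x s : perm_eq (ins x s) (x :: s).
Proof.
elim: s => [|y s IH] //=; case: ifP => _ //.
apply: (perm_trans (_ : perm_eq _ (y :: x :: s))); first by rewrite perm_cons.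
by rewrite (perm_catCA [:: y] [:: x] s).
Qed.

Lemma head_ins x s : nth 0 (ins x s) 0 = if s is y :: _ then (if x <= y then x else y) else x.
Proof. by case: s => //= y s; case: ifP. Qed.

Lemma sorted_ins x s : sorted <=%R s -> sorted <=%R (ins x s).
Proof.
elim: s => [|y s IH] //= Hs; case: ifP => hxy /=; first by rewrite hxy.
have Hs' : sorted <=%R s by move: Hs; case: s {IH} => //= z s /andP[].
have := IH Hs'; case: s Hs Hs' {IH} => [|z s] /= Hs Hs'.
  by rewrite andbT le_eqVlt; move: hxy; case: (ltgtP x y).
move: Hs => /andP[hyz _]; case: ifP => hxz /= ->; rewrite andbT //.
by move: hxy; case: (ltgtP x y).
Qed.

Lemma size_ins x s : size (ins x s) = (size s).+1.
Proof. by elim: s => //= y s IH; case: ifP => //= _; rewrite IH. Qed.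

Lemma ins_ge x s : sorted <=%R s -> forall i, nth 0 s i <= nth 0 (behead (ins x s)) i.
Proof.
elim: s => [|y s IH] /= Hs i; first by rewrite !nth_nil.
case: ifP => hxy /=; first by [].
have Hs' : sorted <=%R s by move: Hs; case: s {IH} => //= z s /andP[].
case: i => [|i] /=.
  rewrite -[ins x s]/(ins x s) head_ins; move: Hs; case: s {IH Hs'} => [|z s] /=.
    by move=> _; rewrite ltW // ltNge hxy.
  case/andP=> hyz _; case: ifP => // _; by rewrite ltW // ltNge hxy.
rewrite -[ins x s]/(ins x s); case E: (ins x s) => [|u v].
  by move: (size_ins x s); rewrite E.
by have := IH Hs' i; rewrite E.
Qed.

Lemma sort_cons_ins x s : sort <=%R (x :: s) = ins x (sort <=%R s).
Proof.
apply: (sorted_eq (@le_trans _ R) (@le_anti _ R)).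
- exact: (sort_sorted (@le_total _ R)).
- apply: sorted_ins; exact: (sort_sorted (@le_total _ R)).
rewrite perm_sort perm_sym (permPl (perm_ins _ _)) perm_cons.
by rewrite perm_sort.
Qed.

End Aux.
Arguments ins {R}.


Section Aux2.
Variable R : realType.

Lemma eB_ge1 n : 1 <= eB n :> R.
Proof. by rewrite /eB exprn_ege1 // lerDl invr_ge0. Qed.

Lemma eB_gt1 n : (0 < n)%N -> 1 < eB n :> R.
Proof.
move=> n0; rewrite /eB exprn_egt1 ?lt0n_neq0 //.
by rewrite ltrDl invr_gt0 ltr0n.
Qed.

Lemma powR_ge1 (a x : R) : 1 <= a -> 0 <= x -> 1 <= a `^ x.
Proof. by move=> a1 x0; rewrite -(powRr0 a) ler_powR. Qed.

Lemma powR_gt1 (a x : R) : 1 < a -> 0 < x -> 1 < a `^ x.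
Proof.
move=> a1 x0; rewrite lt_neqAle powR_ge1 ?ltW // andbT eq_sym powR_eq1.
by rewrite gt_eqF //= ltNge (le_trans ler01 (ltW a1)) /= gt_eqF.
Qed.

Lemma betaS_mono (alpha : R) n S S' : 0 <= alpha ->
  (forall i, nth 0 (sort <=%R S) i <= nth 0 (sort <=%R S') i) ->
  betaS alpha n S <= betaS alpha n S'.
Proof.
move=> a0 H; rewrite /betaS ler_wpM2l //.
  rewrite divr_ge0 // subr_ge0 powR_ge1 ?eB_ge1 //.
  by rewrite divr_ge0.
by apply: ler_sum => i _; rewrite ler_wpM2r // powR_ge0.
Qed.

Lemma betaS_step (alpha : R) n S x : 0 <= alpha ->
  betaS alpha n S <= betaS alpha n (behead (sort <=%R (x :: S))).
Proof.
move=> a0; apply: betaS_mono => // i.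
rewrite sort_cons_ins.
have Hs : sorted <=%R (sort <=%R S) by exact: (sort_sorted (@le_total _ R)).
have Hb : sorted <=%R (behead (ins x (sort <=%R S))).
  by move: (sorted_ins x Hs); case: (ins _ _) => //= y l; apply: path_sorted.
rewrite (sorted_sort (@le_trans _ R) Hb); exact: ins_ge.
Qed.

Lemma betaS0 (alpha : R) n m : betaS alpha n (nseq m 0) = 0.
Proof.
rewrite /betaS big1 ?mulr0 // => i _.
suff -> : nth 0 (sort <=%R (nseq m (0:R))) i = 0 by rewrite mul0r.
case: (ltnP i (size (sort <=%R (nseq m (0:R))))) => hi; last by rewrite nth_default.
have := mem_nth 0 hi; rewrite mem_sort => /nseqP[] //.
Qed.

End Aux2.


Section Aux3.
Variables (R : realType) (k : nat) (alpha : R) (B : 'I_k.+1 -> nat)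
  (w : 'I_k.+1 -> nat -> R) (asg : nat -> 'I_k.+1).
Hypothesis a0 : 0 <= alpha.

Lemma beta_step a t : beta alpha B w asg a t <= beta alpha B w asg a t.+1.
Proof.
rewrite /beta /=; case: ifP => _ //; exact: betaS_step.
Qed.

Lemma beta_mono a t t' : (t <= t')%N ->
  beta alpha B w asg a t <= beta alpha B w asg a t'.
Proof.
move/subnK => <-; elim: (t' - t)%N => [|d IH] //=.
exact: le_trans IH (beta_step _ _).
Qed.

Lemma beta_ge0 a t : 0 <= beta alpha B w asg a t.
Proof.
have -> : 0 = beta alpha B w asg a 0 by rewrite /beta /= betaS0.
exact: beta_mono.
Qed.

End Aux3.

Lemma Bmin_ge1 k (B : 'I_k.+1 -> nat) : (0 < k)%N ->
  (forall a : 'I_k.+1, a != ord0 -> (1 <= B a)%N) -> (1 <= Bmin B)%N.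
Proof.
move=> k0 HB; rewrite /Bmin; apply: (big_ind (fun m => 1 <= m)%N).
- apply: HB; apply/eqP => /(congr1 val) /=; rewrite inordK // ltnS.
- by move=> x y hx hy; rewrite leq_min hx hy.
- by move=> i; exact: HB.
Qed.

Lemma alphaB_gt0 (R : realType) (alpha : R) n : 1 <= alpha -> (1 <= n)%N ->
  0 < alphaB alpha n.
Proof.
move=> a1 n1; rewrite /alphaB mulr_gt0 ?ltr0n // subr_gt0 powR_gt1 ?eB_gt1 //.
by rewrite divr_gt0 ?ltr0n // (lt_le_trans ltr01 a1).
Qed.
End Helpers.
Import Helpers.

Theorem lemmaA2 (R : realType) (k : nat) (B : 'I_k.+1 -> nat) (T : nat)
    (w : 'I_k.+1 -> nat -> R) (PRD : nat -> 'I_k.+1) (alpha : R)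
    (asg : nat -> 'I_k.+1) :
  (0 < k)%N ->
  (forall a : 'I_k.+1, a != ord0 -> (1 <= B a)%N) ->
  (T <= B ord0)%N ->
  (forall t, (1 <= t <= T)%N -> w ord0 t = 0) ->
  (forall a t, (1 <= t <= T)%N -> 0 <= w a t) ->
  (forall a : 'I_k.+1, a != ord0 ->
     (\sum_(1 <= t < T.+1 | PRD t == a) 1 <= B a)%N) ->
  1 <= alpha ->
  is_run alpha B w PRD T asg ->
  \sum_(1 <= t < T.+1) w (PRD t) t <=
  \sum_(a < k.+1)
    (((B a)%:R - (\sum_(1 <= t < T.+1 | (PRD t == a) && (asg t == a)) 1)%N%:R)
        * beta alpha B w asg a T
     + (alphaB alpha (Bmin B))^-1 *
         \sum_(1 <= t < T.+1 | (asg t == a) && (PRD t != a))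
            (w a t - beta alpha B w asg a t.-1)
     + \sum_(1 <= t < T.+1 | (PRD t == a) && (asg t == a)) w a t).
Proof.
move=> k0 HB HT0 Hw0 Hwge HP a1 Hrun.
have a0 : 0 <= alpha by rewrite (le_trans ler01 a1).
have aB : 0 < alphaB alpha (Bmin B) by apply: alphaB_gt0 => //; exact: Bmin_ge1.
pose c := (alphaB alpha (Bmin B))^-1.
pose bt a t := beta alpha B w asg a t.
pose g (a : 'I_k.+1) t :=
  (if (PRD t == a) && ~~ (asg t == a) then bt a t.-1 else 0)
  + (if (asg t == a) && (PRD t != a) then c * (w a t - bt a t.-1) else 0)
  + (if (PRD t == a) && (asg t == a) then w a t else 0).
apply: (@le_trans _ _ (\sum_(1 <= t < T.+1) \sum_(a < k.+1) g a t)).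
  apply: ler_sum_nat => t Ht.
  rewrite (bigD1 (PRD t)) //=.
  case: (eqVneq (asg t) (PRD t)) => Ha.
    rewrite big1 ?addr0.
      by rewrite /g Ha !eqxx /= !addr0 add0r.
    move=> a /negbTE na; rewrite /g Ha eq_sym na /= !add0r.
    done.
  have [aE [HE Hasg]] := Hrun t Ht.
  move: Hasg; case: ifP => Hc Hasg; first by rewrite Hasg eqxx in Ha.
  rewrite (bigD1 (asg t)) /=; last by rewrite Ha.
  rewrite big1 ?addr0; last first.
    move=> a /andP[na1 na2]; rewrite /g eq_sym (negbTE na1) eq_sym (negbTE na2) /=.
    by rewrite !addr0.
  have Hb : (PRD t == asg t) = false by rewrite eq_sym (negbTE Ha).
  rewrite /g eqxx Ha Hb /= !addr0 !add0r /bt.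
  move/negbT: Hc; rewrite -ltNge -Hasg => Hc.
  rewrite andbF (negbTE Ha) !addr0 -lerBlDl /c eqxx /= ler_pdivlMl //; apply: ltW; exact: Hc.
rewrite exchange_big /=; apply: ler_sum => a _.
rewrite /g [X in X <= _]big_split [X in X + _ <= _]big_split /=.
apply: lerD; last by rewrite [X in _ <= X]big_mkcond.
apply: lerD; last by rewrite mulr_sumr [X in _ <= X]big_mkcond.
rewrite -big_mkcond /=.
apply: (@le_trans _ _ (\sum_(1 <= i < T.+1 | (PRD i == a) && (asg i != a)) beta alpha B w asg a T)).
  rewrite big_nat_cond [X in _ <= X]big_nat_cond; apply: ler_sum => i /andP[/andP[_ hi] _].
  apply: beta_mono => //; lia.
have -> : \sum_(1 <= i < T.+1 | (PRD i == a) && (asg i != a)) beta alpha B w asg a T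
   = (\sum_(1 <= i < T.+1 | (PRD i == a) && (asg i != a)) 1)%N%:R * beta alpha B w asg a T.
  by rewrite natr_sum mulr_suml; apply: eq_bigr => i _; rewrite mul1r.
apply: ler_wpM2r; first exact: beta_ge0.
have E : (\sum_(1 <= t < T.+1 | PRD t == a) 1 = \sum_(1 <= t < T.+1 | (PRD t == a) && (asg t == a)) 1 + \sum_(1 <= t < T.+1 | (PRD t == a) && (asg t != a)) 1)%N.
  by rewrite (bigID (fun t => asg t == a)).
rewrite lerBrDr -natrD ler_nat addnC -E.
case: (eqVneq a ord0) => [->|na]; last exact: HP.
apply: leq_trans HT0; rewrite sum1_count (leq_trans (count_size _ _)) //.
by rewrite size_iota subn1.
Qed.
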